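(* If an undirected graph $\mathcal G$ can be represented with a set of $t$ types, then $\nu(\mathcal G)\le t/3$.
   Context: An undirected graph $\mathcal G=(V,E)$ can be represented by a set of types $T$ if there is a map $f:V\to T$ such that for any $t_1,t_2\in T$, either every pair of distinct vertices $u,v$ with $f(u)=t_1$, $f(v)=t_2$ is an edge, or no such pair is an edge; moreover (standing convention) no edge joins two vertices of the same type. A set of odd cycles $\{c_1,\dots,c_l\}$ is independent if the cycles are pairwise vertex-disjoint and no edge joins a vertex of $c_i$ to a vertex of $c_j$ for $i\ne j$; $\nu(\mathcal G)$ is the maximum size of an independent set of odd cycles of $\mathcal G$. *)

(* Defs.v *)
From mathcomp Require Import all_boot.
Set Implicit Arguments. Unset Strict Implicit. Unset Printing Implicit Defensive.

Definition simple_graph (V : finType) (e : rel V) : Prop :=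
  symmetric e /\ irreflexive e.

Definition represents (V T : finType) (e : rel V) (f : V -> T) : Prop :=
  (forall t1 t2 : T,
     (forall u v : V, u != v -> f u = t1 -> f v = t2 -> e u v) \/
     (forall u v : V, u != v -> f u = t1 -> f v = t2 -> ~~ e u v))
  /\ (forall u v : V, f u = f v -> ~~ e u v).

Definition odd_cycle (V : finType) (e : rel V) (c : seq V) : bool :=
  [&& uniq c, 3 <= size c, odd (size c) & cycle e c].

Definition independent_odd_cycles (V : finType) (e : rel V) (cs : seq (seq V)) : Prop :=
  (forall c, c \in cs -> odd_cycle e c) /\
  (forall i j, i < size cs -> j < size cs -> i != j ->
     forall u v, u \in nth [::] cs i -> v \in nth [::] cs j -> u != v /\ ~~ e u v).

(* Main.v *)
Require Import Defs.
From mathcomp Require Import all_boot.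

Section Aux.
Variables (V T : finType) (e : rel V) (f : V -> T).

Lemma alt_path (c : seq V) (g : V -> bool) :
  (forall y z, y \in c -> z \in c -> e y z -> g z = ~~ g y) ->
  forall p x, x \in c -> all (mem c) p -> path e x p ->
  g (last x p) = odd (size p) (+) g x.
Proof.
move=> H; elim=> [|y p IH] x xc //=.
move=> /andP [yc pc] /andP [exy pp].
rewrite (IH y yc pc pp) (H x y xc yc exy).
by case: (odd (size p)); case: (g x).
Qed.

Lemma odd_cycle_types (c : seq V) :
  simple_graph e -> represents e f -> odd_cycle e c ->
  2 < #|[set f x | x in c]|.
Proof.
move=> [sym irr] [_ rdiff] /and4P [uc sz oc cy].
case: c uc sz oc cy => [|x p] //= uc sz oc cy.
rewrite ltnNge; apply/negP => Hle.
set S := [set f y | y in x :: p] in Hle.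
have Hadj : forall y z, y \in x :: p -> z \in x :: p -> e y z ->
   (f z == f x) = ~~ (f y == f x).
  move=> y z yc zc eyz.
  have fyz : f y != f z.
    apply/negP => /eqP h; by move: (rdiff _ _ h); rewrite eyz.
  case: (eqVneq (f y) (f x)) => hy /=.
    by apply/negbTE; rewrite -hy eq_sym.
  case: eqP => // /eqP hz.
  have : 2 < #|S|.
    apply/card_gt2P; exists (f y), (f z), (f x); split; last first.
      by split => //; rewrite eq_sym.
    split; apply/imsetP; [exists y|exists z|exists x] => //.
    by rewrite inE eqxx.
  by rewrite ltnNge Hle.
have xc : x \in x :: p by rewrite inE eqxx.
have := @alt_path (x :: p) (fun y => f y == f x) Hadj (rcons p x) x xc.
rewrite last_rcons size_rcons /=.
have -> : all (mem (x :: p)) (rcons p x).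
  apply/allP => y; rewrite mem_rcons inE => /orP [/eqP->|yp] //.
move=> /(_ isT cy).
by rewrite eqxx (negbTE oc).
Qed.

Lemma indep_tail c cs :
  independent_odd_cycles e (c :: cs) -> independent_odd_cycles e cs.
Proof.
move=> [H1 H2]; split.
  by move=> c' hc; apply: H1; rewrite inE hc orbT.
move=> i j hi hj hij u v hu hv.
by apply: (H2 i.+1 j.+1) => //.
Qed.

Lemma indep_head c cs c' u v :
  independent_odd_cycles e (c :: cs) -> c' \in cs -> u \in c -> v \in c' ->
  u != v /\ ~~ e u v.
Proof.
move=> [_ H2] hc hu hv.
apply: (H2 0 (index c' cs).+1) => //=.
  by rewrite ltnS index_mem.
by rewrite nth_index.
Qed.

Lemma types_disjoint (c : seq V) u v :
  simple_graph e -> represents e f -> odd_cycle e c -> u \in c ->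
  f u = f v -> (forall w, w \in c -> w != v /\ ~~ e w v) -> False.
Proof.
move=> [sym irr] [rall _] /and4P [uc sz oc cy] hu fuv H.
set w := next c u.
have euw : e u w by apply: next_cycle.
have wc : w \in c by rewrite mem_next.
have wu : w != u.
  apply/negP => /eqP h; by move: euw; rewrite h irr.
case: (rall (f w) (f u)) => h.
  have [wv newv] := H w wc.
  by move: (h w v wv erefl (esym fuv)); rewrite (negbTE newv).
by move: (h w u wu erefl erefl); rewrite sym euw.
Qed.

End Aux.

Lemma bigcup_seq_ex (I T : finType) (F : seq I -> {set T}) (cs : seq (seq I)) t :
  t \in \bigcup_(c <- cs) F c -> exists2 c, c \in cs & t \in F c.
Proof.
elim: cs => [|c cs IH]; first by rewrite big_nil inE.
rewrite big_cons inE => /orP [h|/IH [c' h1 h2]].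
  by exists c; rewrite ?inE ?eqxx.
by exists c'; rewrite ?inE ?h1 ?orbT.
Qed.

Theorem mainTheorem7 (V T : finType) (e : rel V) (f : V -> T) :
  simple_graph e -> represents e f ->
  forall cs : seq (seq V), independent_odd_cycles e cs -> 3 * size cs <= #|T|.
Proof.
move=> sg rep cs ind.
suff : 3 * size cs <= #|\bigcup_(c <- cs) [set f x | x in c]|.
  move=> h; apply: (leq_trans h); exact: max_card.
elim: cs ind => [|c cs IH] ind; first by rewrite muln0.
rewrite big_cons cardsU.
have -> : [set f x | x in c] :&: \bigcup_(c0 <- cs) [set f x | x in c0] = set0.
  apply/setP => t; rewrite !inE; apply/negP => /andP [/imsetP [u hu ->]].
  move=> /bigcup_seq_ex [c' hc' /imsetP [v hv fv]].
  have [oc _] := ind.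
  apply: (@types_disjoint V T e f c u v sg rep (oc c _) hu fv) => //.
    by rewrite inE eqxx.
  by move=> w hw; exact: (@indep_head V e c cs c' w v ind hc' hw hv).
rewrite cards0 subn0 /= mulnS.
apply: leq_add; last exact: IH (@indep_tail V e c cs ind).
apply: (@odd_cycle_types V T e f) => //.
by apply: ind.1; rewrite inE eqxx.
Qed.
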